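(* Every celebrity game $\Gamma=\langle V,(w_u)_{u\in V},\alpha,\beta\rangle$ with $\beta>1$ has a Nash equilibrium. More precisely, with $n=|V|$ and $w_{\max}=\max_{u\in V}w_u$: if $\alpha\ge w_{\max}$ then the edgeless graph $I_n$ on $V$ is a Nash equilibrium graph of $\Gamma$; if $\alpha<w_{\max}$ then a star graph $S_n$ on $V$ (a tree in which one vertex is adjacent to all the others) is a Nash equilibrium graph of $\Gamma$, while $I_n$ is not.
   Context: A celebrity game $\Gamma=\langle V,(w_u)_{u\in V},\alpha,\beta\rangle$ consists of a set of players $V=\{1,\dots,n\}$, celebrity weights $w_u>0$, a link cost $\alpha>0$ and a critical distance $\beta$ with $1\le\beta\le n-1$. A strategy of player $u$ is a set $S_u\subseteq V\setminus\{u\}$; a strategy profile is $S=(S_1,\dots,S_n)$; its outcome graph $G[S]$ is the undirected graph on $V$ with edge set $\{\{u,v\}: u\in S_v\text{ or }v\in S_u\}$. With $d_G$ the graph distance (infinite between different connected components), the cost of player $u$ is $c_u(S)=\alpha|S_u|+\sum_{v:\,d_{G[S]}(u,v)>\beta}w_v$. $S$ is a Nash equilibrium if no player can strictly decrease its cost by changing only its own strategy; a graph $G$ is a Nash equilibrium graph of $\Gamma$ if $G=G[S]$ for some Nash equilibrium $S$. *)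

(* Defs.v *)
From mathcomp Require Import all_boot all_order all_algebra.
Set Implicit Arguments. Unset Strict Implicit. Unset Printing Implicit Defensive.
Import Order.TTheory GRing.Theory Num.Theory.
Local Open Scope ring_scope.

(* Players are V = 'I_n.  A graph on V is a symmetric relation (edge set). *)

(* dist_le e k u v  <=>  d_G(u,v) <= k, i.e. there is a walk of length <= k
   from u to v in the graph with adjacency relation e.
   (d(u,v) > k, including d = infinity, is exactly ~~ dist_le e k u v.) *)
Fixpoint dist_le {T : finType} (e : rel T) (k : nat) (u v : T) : bool :=
  match k with
  | 0 => u == v
  | k'.+1 => dist_le e k' u v || [exists x, dist_le e k' u x && e x v]
  end.

(* A strategy profile: S u is the set of players u buys links to. *)
Definition profile (n : nat) := 'I_n -> {set 'I_n}.

Definition valid_profile n (S : profile n) : Prop := forall u, u \notin S u.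

Definition outcome n (S : profile n) : rel 'I_n :=
  fun u v => (u \in S v) || (v \in S u).

Definition cost (R : realFieldType) n (w : 'I_n -> R) (alpha : R) (beta : nat)
    (S : profile n) (u : 'I_n) : R :=
  alpha * (#|S u|)%:R
  + \sum_(v | ~~ dist_le (outcome S) beta u v) w v.

Definition deviate n (S : profile n) (u : 'I_n) (T : {set 'I_n}) : profile n :=
  fun x => if x == u then T else S x.

Definition nash (R : realFieldType) n (w : 'I_n -> R) (alpha : R) (beta : nat)
    (S : profile n) : Prop :=
  valid_profile S /\
  forall u (T : {set 'I_n}), u \notin T ->
    cost w alpha beta S u <= cost w alpha beta (deviate S u T) u.

Definition is_NE_graph (R : realFieldType) n (w : 'I_n -> R) (alpha : R)
    (beta : nat) (G : rel 'I_n) : Prop :=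
  exists S : profile n, nash w alpha beta S /\ forall x y, G x y = outcome S x y.

Definition edgeless n : rel 'I_n := fun _ _ => false.

Definition star n (c : 'I_n) : rel 'I_n :=
  fun x y => (x != y) && ((x == c) || (y == c)).

(* w_max = max_u w_u (weights are positive, so 0 is a neutral start). *)
Definition wmax (R : realFieldType) n (w : 'I_n -> R) : R :=
  \big[Num.max/0]_(u < n) w u.

(* Main.v *)
Require Import Defs.
From mathcomp Require Import all_boot all_order all_algebra.
From mathcomp Require Import zify.
Import Order.TTheory GRing.Theory Num.Theory.
Local Open Scope ring_scope.

Lemma dist_le_refl (T : finType) (e : rel T) k u : dist_le e k u u.
Proof. by elim: k => [|k IH] //=; rewrite IH. Qed.

Lemma dist_le_mono (T : finType) (e : rel T) k k' u v :
  (k <= k')%N -> dist_le e k u v -> dist_le e k' u v.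
Proof.
elim: k' => [|k' IH]; first by rewrite leqn0 => /eqP ->.
rewrite leq_eqVlt => /orP [/eqP -> //|Hk] H /=.
by rewrite IH.
Qed.

Lemma dist_le_closed (T : finType) (e : rel T) (A : {set T}) k u v :
  (forall a b, a \in A -> e a b -> b \in A) -> u \in A ->
  dist_le e k u v -> v \in A.
Proof.
move=> HA Hu; elim: k v => [|k IH] v /=; first by move/eqP <-.
case/orP => [/IH //|/existsP [x /andP [Hx Hxv]]].
exact: HA (IH _ Hx) Hxv.
Qed.

Lemma sum_sub (R : realFieldType) n (w : 'I_n -> R) (P Q : pred 'I_n) :
  (forall u, 0 < w u) -> (forall v, P v -> Q v) ->
  \sum_(v | P v) w v <= \sum_(v | Q v) w v.
Proof.
move=> wp PQ; rewrite [X in _ <= X]big_mkcond [X in X <= _]big_mkcond /=.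
apply: ler_sum => v _; case: (boolP (P v)) => Pv; first by rewrite PQ.
by case: (Q v) => //; exact: ltW.
Qed.

Lemma sum_ge0' (R : realFieldType) n (w : 'I_n -> R) (P : pred 'I_n) :
  (forall u, 0 < w u) -> 0 <= \sum_(v | P v) w v.
Proof. by move=> wp; apply: sumr_ge0 => v _; exact: ltW. Qed.

Lemma wmax_attained (R : realFieldType) n (w : 'I_n -> R) (i : 'I_n) :
  (forall u, 0 < w u) -> exists c, wmax w <= w c.
Proof.
move=> wp. have [c _ E] := @eq_bigmax _ _ _ 0 i predT w isT (fun i _ => ltW (wp i)).
by exists c; have -> : wmax w = w c by exact: E.
Qed.

Lemma le_wmax (R : realFieldType) n (w : 'I_n -> R) u : w u <= wmax w.
Proof. exact: le_bigmax. Qed.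

Definition S0 n : profile n := fun _ => set0.
Arguments S0 {n}.

Lemma dist_empty n (S : profile n) k u v :
  (forall x y, outcome S x y = false) -> dist_le (outcome S) k u v = (u == v).
Proof.
move=> H; apply/idP/idP; last by move/eqP <-; exact: dist_le_refl.
move=> Hd; have : v \in [set u].
  by apply: (@dist_le_closed _ _ [set u] k u v _ (set11 u) Hd) => a b _; rewrite H.
by rewrite in_set1 eq_sym.
Qed.

Lemma edgeless_nash (R : realFieldType) n (w : 'I_n -> R) alpha beta :
  (forall u, 0 < w u) -> wmax w <= alpha -> nash w alpha beta (@S0 n).
Proof.
move=> wp Hal; split => [u|u T uT]; first by rewrite in_set0.
rewrite /cost /S0 cards0 mulr0 add0r.
rewrite (eq_bigl (fun v => u != v)); last first.
  by move=> v; rewrite dist_empty // => x y; rewrite /outcome /S0 !in_set0.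
rewrite (bigID (fun v => v \in T)) /=.
apply: lerD.
- rewrite /deviate eqxx.
  apply: (@le_trans _ _ (\sum_(v in T) alpha)).
    rewrite [X in X <= _](eq_bigl (fun v => v \in T)); last first.
      by move=> v; case: (eqVneq u v) => [<-|]; rewrite ?(negbTE uT) ?andbT.
    apply: ler_sum => v _; exact: le_trans (le_wmax _ _ w v) Hal.
  by rewrite sumr_const mulr_natr.
- apply: sum_sub => // v /andP [uv vT]; apply/negP => Hd.
  have : v \in u |: T.
    apply: (@dist_le_closed _ _ (u |: T) beta u v _ (setU11 _ _) Hd).
    move=> a b _; rewrite /outcome /deviate.
    rewrite in_setU1; case: (eqVneq b u) => [->|bu] //=.
    case: (eqVneq a u) => [->|au]; last by rewrite !in_set0.
    by rewrite in_set0.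
  by rewrite in_setU1 (negbTE vT) eq_sym (negbTE uv).
Qed.

Definition Sstar n (c : 'I_n) : profile n :=
  fun y => if y == c then set0 else [set c].
Arguments Sstar {n}.

Lemma star_outcome n (c : 'I_n) x y : star c x y = outcome (Sstar c) x y.
Proof.
rewrite /star /outcome /Sstar.
case: (eqVneq x c) => [->|xc]; case: (eqVneq y c) => [->|yc];
  rewrite ?in_set0 ?in_set1 ?eqxx ?andbT ?andbF ?orbF ?orbT //=.
  by rewrite (negbTE xc) (negbTE yc).
Qed.

Lemma star_nash (R : realFieldType) n (w : 'I_n -> R) alpha beta (c : 'I_n) :
  (forall u, 0 < w u) -> 0 < alpha -> (1 < beta)%N -> alpha < w c ->
  nash w alpha beta (Sstar c).
Proof.
move=> wp ap b1 ac; split => [u|u T uT].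
  by rewrite /Sstar; case: (eqVneq u c) => [_|uc]; rewrite ?in_set0 ?in_set1.
have Hcost' : 0 <= cost w alpha beta (deviate (Sstar c) u T) u.
  by apply: addr_ge0; [apply: mulr_ge0; [exact: ltW|exact: ler0n]|exact: sum_ge0'].
have all2 : forall v, dist_le (outcome (Sstar c)) beta u v.
  move=> v; apply: (@dist_le_mono _ _ 2); first exact: b1.
  have e_c : forall x, x != c -> outcome (Sstar c) x c.
    by move=> x xc; rewrite /outcome /Sstar (negbTE xc) in_set1 eqxx orbT.
  have d1 : forall x, dist_le (outcome (Sstar c)) 1 x c.
    move=> x; case: (eqVneq x c) => [->|xc]; first exact: dist_le_refl.
    by rewrite /=; apply/orP; right; apply/existsP; exists x; rewrite eqxx e_c.
  case: (eqVneq v c) => [->|vc].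
    by apply: (@dist_le_mono _ _ 1) => //; exact: d1.
  apply/orP; right; apply/existsP; exists c; apply/andP; split; first exact: d1.
  by rewrite /outcome /Sstar (negbTE vc) in_set1 eqxx.
have sum0 : \sum_(v | ~~ dist_le (outcome (Sstar c)) beta u v) w v = 0.
  by apply: big_pred0 => v; rewrite all2.
rewrite {1}/cost sum0 addr0 /Sstar.
case: (eqVneq u c) => [_|uc]; first by rewrite cards0 mulr0.
rewrite cards1 mulr1.
case: (eqVneq T set0) => [T0|Tn0].
- rewrite /cost; subst T.
  rewrite /deviate eqxx cards0 mulr0 add0r.
  apply: ltW; apply: (lt_le_trans ac).
  rewrite (bigD1 c) /=; last first.
    apply/negP => Hd.
    have : c \in [set u]; last by rewrite in_set1 eq_sym (negbTE uc).
    apply: (@dist_le_closed _ _ [set u] beta u c _ (set11 u) Hd).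
    move=> a b; rewrite in_set1 => /eqP ->; rewrite /outcome /deviate eqxx in_set0 orbF.
    by case: (b == u); case: (b == c); rewrite ?in_set0 ?in_set1 // (negbTE uc).
  by rewrite lerDl; apply: sum_ge0'.
- rewrite /cost /deviate eqxx.
  apply: (@le_trans _ _ (alpha * #|T|%:R)); last by rewrite lerDl; apply: sum_ge0'.
  rewrite -{1}(mulr1 alpha) ler_pM2l // ler1n card_gt0 //.
Qed.

Theorem proposition4 (R : realFieldType) (n : nat) (w : 'I_n -> R) (alpha : R)
    (beta : nat) :
  (forall u, 0 < w u) -> 0 < alpha -> (1 <= beta)%N -> (beta <= n.-1)%N ->
  (1 < beta)%N ->
  (exists G : rel 'I_n, is_NE_graph w alpha beta G) /\
  (wmax w <= alpha -> is_NE_graph w alpha beta (@edgeless n)) /\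
  (alpha < wmax w ->
     (exists c : 'I_n, is_NE_graph w alpha beta (star c)) /\
     ~ is_NE_graph w alpha beta (@edgeless n)).
Proof.
move=> wp ap b1 bn b2.
have n3 : (2 < n)%N by move: b2 bn; clear; lia.
have P2 : wmax w <= alpha -> is_NE_graph w alpha beta (@edgeless n).
  by move=> H; exists (@S0 n); split; [exact: edgeless_nash|move=> x y; rewrite /outcome /S0 !in_set0].
have P3 : alpha < wmax w -> exists c : 'I_n, is_NE_graph w alpha beta (star c).
  move=> H; have [c Hc] := wmax_attained _ _ w (Ordinal (ltnW (ltnW n3))) wp.
  exists c, (Sstar c); split; last exact: star_outcome.
  by apply: star_nash => //; exact: lt_le_trans Hc.
split.
  by case: (leP (wmax w) alpha) => H; [exists (@edgeless n); exact: P2|have [c Hc] := P3 H; exists (star c)].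
split => // H; split; first exact: P3.
case=> S [[valS NE] HG].
have HS : forall x y, outcome S x y = false by move=> x y; rewrite -HG.
have Sempty : forall x, S x = set0.
  move=> x; apply/setP => y; rewrite in_set0; apply/negP => Hy.
  by have := HS y x; rewrite /outcome Hy.
have [c Hc] := wmax_attained _ _ w (Ordinal (ltnW (ltnW n3))) wp.
have [u uc] : exists u : 'I_n, u != c.
  case: (eqVneq c (Ordinal (ltnW (ltnW n3)))) => [E|E].
    by exists (Ordinal (ltnW n3)); rewrite E.
  by exists (Ordinal (ltnW (ltnW n3))); rewrite eq_sym.
have := NE u [set c]; rewrite in_set1 (negbTE uc) => /(_ isT).
apply/negP; rewrite -ltNge /cost Sempty cards0 mulr0 add0r /deviate eqxx cards1 mulr1.
rewrite [X in _ < X](eq_bigl (fun v => u != v)); last by move=> v; rewrite dist_empty.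
rewrite [X in _ < X](bigD1 c) //=.
apply: ltr_leD; first exact: lt_le_trans Hc.
apply: sum_sub => // v /negP Hnd; apply/andP; split; apply/negP => /eqP E; apply: Hnd.
  by rewrite -E; exact: dist_le_refl.
rewrite E; apply: (@dist_le_mono _ _ 1) => //.
apply/orP; right; apply/existsP; exists u; apply/andP; split; first by [].
by rewrite /outcome /deviate eqxx in_set1 eqxx orbT.
Qed.
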